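(* Let $n\ge2$. As real vector spaces, $J\mathcal{E}=\mathcal{N}_0\oplus J\mathcal{P}$.
   Context: Realize the unit sphere $S^{2n-1}$ near the point $e_0$ in Siegel form: coordinates $(w',w_n)\in\mathbb{C}^{n-1}\times\mathbb{C}$, the sphere is $2\operatorname{Re}w_n=|w'|^2$, $e_0=0$, and $(w',v)$ with $v=\operatorname{Im}w_n$ are local coordinates on it. $J\mathcal{E}$ is the space of $\infty$-jets at $e_0$ of real smooth functions, i.e. real formal power series in $(w',\bar w',v)$. $J\mathcal{P}\subset J\mathcal{E}$ is the subspace of jets of CR pluriharmonic functions, i.e. formal series of the form $\operatorname{Re}\sum_{\alpha\in\mathbb{N}^{n-1},\,l\ge0}A^l_\alpha\,{w'}^\alpha(|w'|^2+2iv)^l$ with $A^l_\alpha\in\mathbb{C}$. Write $f\in J\mathcal{E}$ as $f=\sum_{p,q\ge0}A_{p,q}(v)$ with $A_{p,q}(v)=\sum_{|\alpha|=p,|\beta|=q,l\ge0}A^l_{\alpha\bar\beta}{w'}^\alpha\bar w'^\beta v^l$. Let $\Delta'=\sum_{j=1}^{n-1}\partial_{w_j}\partial_{\bar w_j}$. $\mathcal{N}_0\subset J\mathcal{E}$ is the subspace defined by $A_{p,q}=0$ whenever $\min(p,q)=0$, and $\Delta'A_{1,1}=0$. *)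

(* Defs.v *)
From HB Require Import structures.
From mathcomp Require Import all_boot all_order all_algebra.
From mathcomp Require Import reals.
From mathcomp.real_closed Require Import complex.
From mathcomp Require Import mpoly.

Set Implicit Arguments.
Unset Strict Implicit.
Unset Printing Implicit Defensive.
Import GRing.Theory Num.Theory.
Local Open Scope ring_scope.

(* Throughout, k = n - 1 is the number of coordinates w' = (w_1,...,w_k).
   Formal power series in (w', \bar w', v) have 2k+1 formal variables,
   indexed by 'I_(2k+1):
     index j       (j < k)  <-> w_j
     index k + j   (j < k)  <-> \bar w_j
     index 2k               <-> v.
   A monomial w'^a \bar w'^b v^l is a multinomial m : 'X_{1..2k+1}. *)

Section JetDefs.
Variable R : realType.
Variable k : nat.

Local Notation N := (2 * k).+1.

Definition iw (j : 'I_k) : 'I_N := inord j.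
Definition ibw (j : 'I_k) : 'I_N := inord (k + j).
Definition iv : 'I_N := inord (2 * k).

Definition series := 'X_{1..N} -> R[i].

(* exchange of w_j and \bar w_j *)
Definition swap_idx (i : 'I_N) : 'I_N :=
  if (i < k)%N then inord (i + k) else if (i < 2 * k)%N then inord (i - k) else i.
Definition mswap (m : 'X_{1..N}) : 'X_{1..N} := [multinom m (swap_idx i) | i < N].

(* complex conjugate series: conj of c_m w^a \bar w^b v^l is
   conj(c_m) \bar w^a w^b v^l (v is real) *)
Definition conj_series (c : series) : series := fun m => (c (mswap m))^*.

(* J E : jets of real smooth functions = real formal series *)
Definition JE (c : series) : Prop := forall m, conj_series c m = c m.

Definition degw (m : 'X_{1..N}) : nat := (\sum_(j < k) m (iw j))%N.
Definition degbw (m : 'X_{1..N}) : nat := (\sum_(j < k) m (ibw j))%N.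

Definition Apq (p q : nat) (c : series) : series :=
  fun m => if (degw m == p) && (degbw m == q) then c m else 0.

Definition fderiv (i : 'I_N) (c : series) : series :=
  fun m => (m i).+1%:R * c (m + U_(i))%MM.

Definition Laplw (c : series) : series :=
  fun m => \sum_(j < k) fderiv (iw j) (fderiv (ibw j) c) m.

Definition N0 (c : series) : Prop :=
  JE c /\
  (forall p q, minn p q = 0%N -> forall m, Apq p q c m = 0) /\
  (forall m, Laplw (Apq 1 1 c) m = 0).

Definition Pterm (alpha : 'X_{1..k}) (l : nat) : {mpoly R[i][N]} :=
  (\prod_(j < k) 'X_(iw j) ^+ alpha j) *
  (\sum_(j < k) 'X_(iw j) * 'X_(ibw j) + (2 * 'i)%:MP * 'X_iv) ^+ l.

Definition formal_sum (I : eqType) (F : I -> series) (g : series) : Prop :=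
  forall m, exists s : seq I,
    [/\ uniq s, (forall x, x \notin s -> F x m = 0) & g m = \sum_(x <- s) F x m].

(* J P : jets of CR pluriharmonic functions,
   Re sum_{alpha,l} A^l_alpha w'^alpha (|w'|^2 + 2 i v)^l *)
Definition JP (c : series) : Prop :=
  exists (A : 'X_{1..k} -> nat -> R[i]) (g : series),
    formal_sum (fun al : 'X_{1..k} * nat => fun m => A al.1 al.2 * (Pterm al.1 al.2)@_m) g /\
    (forall m, c m = (g m + conj_series g m) / 2%:R).

End JetDefs.

(* Main.v *)
Require Import Defs.
From HB Require Import structures.
From mathcomp Require Import all_boot all_order all_algebra.
From mathcomp Require Import reals.
From mathcomp.real_closed Require Import complex.
From mathcomp Require Import mpoly.
From mathcomp Require Import zify ring.
Import GRing.Theory Num.Theory.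
Local Open Scope ring_scope.

Set Implicit Arguments.
Unset Strict Implicit.
Unset Printing Implicit Defensive.

Section Work.
Variable R : realType.
Variable k : nat.
Hypothesis hk : (0 < k)%N.
Local Notation N := (2 * k).+1.
Local Notation C := R[i].

Lemma val_iw (j : 'I_k) : (iw j : nat) = j.
Proof. rewrite /iw inordK //; apply: (leq_trans (ltn_ord j)); lia. Qed.
Lemma val_ibw (j : 'I_k) : (ibw j : nat) = (k + j)%N.
Proof. rewrite /ibw inordK //; have := ltn_ord j; lia. Qed.
Lemma val_iv : (iv k : nat) = (2 * k)%N.
Proof. by rewrite /iv inordK. Qed.

Lemma eq_iw (a b : 'I_k) : (iw a == iw b) = (a == b).
Proof. by rewrite -val_eqE /= !val_iw. Qed.
Lemma eq_ibw (a b : 'I_k) : (ibw a == ibw b) = (a == b).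
Proof. rewrite -val_eqE /= !val_ibw -val_eqE /=; apply/eqP/eqP; lia. Qed.
Lemma eq_iw_ibw (a b : 'I_k) : (iw a == ibw b) = false.
Proof. apply/negbTE; rewrite -val_eqE /= val_iw val_ibw; have := ltn_ord a; lia. Qed.
Lemma eq_ibw_iw (a b : 'I_k) : (ibw a == iw b) = false.
Proof. by rewrite eq_sym eq_iw_ibw. Qed.
Lemma eq_iw_iv (a : 'I_k) : (iw a == iv k) = false.
Proof. apply/negbTE; rewrite -val_eqE /= val_iw val_iv; have := ltn_ord a; lia. Qed.
Lemma eq_iv_iw (a : 'I_k) : (iv k == iw a) = false.
Proof. by rewrite eq_sym eq_iw_iv. Qed.
Lemma eq_ibw_iv (a : 'I_k) : (ibw a == iv k) = false.
Proof. apply/negbTE; rewrite -val_eqE /= val_ibw val_iv; have := ltn_ord a; lia. Qed.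
Lemma eq_iv_ibw (a : 'I_k) : (iv k == ibw a) = false.
Proof. by rewrite eq_sym eq_ibw_iv. Qed.

Definition eqidx := (eq_iw, eq_ibw, eq_iw_ibw, eq_ibw_iw, eq_iw_iv, eq_iv_iw,
  eq_ibw_iv, eq_iv_ibw, eqxx).

Lemma idx_cases (P : 'I_N -> Prop) :
  (forall j, P (iw j)) -> (forall j, P (ibw j)) -> P (iv k) -> forall i, P i.
Proof.
move=> Pw Pb Pv i.
case: (ltnP i k) => h1.
  have -> : i = iw (Ordinal h1) by apply: ord_inj; rewrite /= val_iw.
  exact: Pw.
case: (ltnP i (2 * k)) => h2.
  have h3 : (i - k < k)%N by lia.
  have -> : i = ibw (Ordinal h3) .
  apply: ord_inj; rewrite val_ibw; simpl nat_of_ord; lia.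
  exact: Pb.
have -> : i = iv k.
  apply: ord_inj; rewrite /= val_iv; have := ltn_ord i; lia.
exact: Pv.
Qed.
Lemma swap_iw (j : 'I_k) : swap_idx (iw j) = ibw j.
Proof.
rewrite /swap_idx val_iw ltn_ord.
apply: ord_inj; rewrite val_ibw inordK; last by have := ltn_ord j; lia.
by rewrite addnC.
Qed.
Lemma swap_ibw (j : 'I_k) : swap_idx (ibw j) = iw j.
Proof.
rewrite /swap_idx val_ibw.
have hj := ltn_ord j.
have -> : (k + j < k)%N = false by lia.
have -> : (k + j < 2 * k)%N = true by lia.
apply: ord_inj; rewrite val_iw inordK; lia.
Qed.
Lemma swap_iv : swap_idx (iv k) = iv k.
Proof.
rewrite /swap_idx val_iv.
have -> : (2 * k < k)%N = false by lia.
by have -> : (2 * k < 2 * k)%N = false by lia.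
Qed.

Lemma mswapE (m : 'X_{1..N}) i : mswap m i = m (swap_idx i).
Proof. by rewrite /mswap mnmE. Qed.
Lemma mswapK (m : 'X_{1..N}) : mswap (mswap m) = m.
Proof.
apply/mnmP => i; rewrite !mswapE; move: i.
apply: idx_cases => [j|j|]; by rewrite ?(swap_iw, swap_ibw, swap_iv).
Qed.
Lemma mswap_fix (m : 'X_{1..N}) : (forall j, m (iw j) = m (ibw j)) -> mswap m = m.
Proof.
move=> h; apply/mnmP => i; rewrite !mswapE; move: i.
apply: idx_cases => [j|j|]; rewrite ?(swap_iw, swap_ibw, swap_iv) //.
Qed.

Lemma degw0 (m : 'X_{1..N}) : degw m = 0%N <-> forall j, m (iw j) = 0%N.
Proof.
split; last by move=> h; rewrite /degw big1.
move=> /eqP; rewrite /degw sum_nat_eq0 => /forallP h j.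
by apply/eqP; have := h j.
Qed.
Lemma degbw0 (m : 'X_{1..N}) : degbw m = 0%N <-> forall j, m (ibw j) = 0%N.
Proof.
split; last by move=> h; rewrite /degbw big1.
move=> /eqP; rewrite /degbw sum_nat_eq0 => /forallP h j.
by apply/eqP; have := h j.
Qed.

Lemma degbw_mswap (m : 'X_{1..N}) : degbw (mswap m) = degw m.
Proof. by apply: eq_bigr => j _; rewrite mswapE swap_ibw. Qed.
Lemma degw_mswap (m : 'X_{1..N}) : degw (mswap m) = degbw m.
Proof. by apply: eq_bigr => j _; rewrite mswapE swap_iw. Qed.

Definition cc : C := 2 * 'i.
Definition Q : {mpoly C[N]} :=
  \sum_(j < k) 'X_(iw j) * 'X_(ibw j) + (2 * 'i)%:MP * 'X_(iv k).
Definition aw (a : 'X_{1..k}) : 'X_{1..N} := (\sum_(j < k) U_(iw j) *+ a j)%MM.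

Lemma Pterm_E a l : Pterm R a l = Q ^+ l * 'X_[aw a].
Proof.
rewrite /Pterm mulrC; congr (_ * _).
by rewrite /aw -mprodXnE.
Qed.

Lemma mcoeffMX' (p : {mpoly C[N]}) u m :
  (p * 'X_[u])@_m = if (u <= m)%MM then p@_(m - u) else 0.
Proof.
case: ifP => h.
  by rewrite -{1}(submK h) addmC mcoeffMX.
apply/eqP; rewrite mcoeff_eq0 (perm_mem (msuppMX p u)).
apply/negP => /mapP [m' _ em]; move: h; rewrite em.
by rewrite lem_addr.
Qed.

Lemma mcoeffPterm a l m : (Pterm R a l)@_m =
  if (aw a <= m)%MM then (Q ^+ l)@_(m - aw a) else 0.
Proof. by rewrite Pterm_E mcoeffMX'. Qed.

Lemma lemU i (m : 'X_{1..N}) : (U_(i) <= m)%MM = (0 < m i)%N.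
Proof.
apply/mnm_lepP/idP => [h|h j]; first by have := h i; rewrite mnm1E eqxx.
by rewrite mnm1E; case: eqP => [<-|] //.
Qed.

Lemma lemUU i j (m : 'X_{1..N}) : i != j ->
  (U_(i) + U_(j) <= m)%MM = (0 < m i)%N && (0 < m j)%N.
Proof.
move=> nij; apply/mnm_lepP/andP => [h|[h1 h2] t].
  have := h i; have := h j; rewrite !mnmDE !mnm1E !eqxx (negbTE nij).
  by rewrite eq_sym (negbTE nij) /=.
rewrite mnmDE !mnm1E.
case: (eqVneq i t) => [eit|nit]; case: (eqVneq j t) => [ejt|njt] //=.
- by move: nij; rewrite eit ejt eqxx.
- by rewrite addn0 -eit.
- by rewrite -ejt.
Qed.

Lemma QS l m : (Q ^+ l.+1)@_m =
  \sum_(j < k) (if (U_(iw j) + U_(ibw j) <= m)%MM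
                then (Q ^+ l)@_(m - (U_(iw j) + U_(ibw j))) else 0)
  + cc * (if (U_(iv k) <= m)%MM then (Q ^+ l)@_(m - U_(iv k)) else 0).
Proof.
rewrite exprSr {2}/Q mulrDr mcoeffD mulr_sumr raddf_sum /=.
congr (_ + _).
  by apply: eq_bigr => j _; rewrite -mpolyXD mcoeffMX'.
by rewrite mulrCA mcoeffCM mcoeffMX'.
Qed.

Definition vm t : 'X_{1..N} := (U_(iv k) *+ t)%MM.

Lemma vmE t i : vm t i = ((iv k == i) * t)%N.
Proof. by rewrite /vm mulmnE mnm1E mulnC. Qed.

Lemma vm_eq a b : (vm a == vm b) = (a == b).
Proof.
apply/eqP/eqP => [h|->] //.
by have := congr1 (fun m : 'X_{1..N} => m (iv k)) h; rewrite /= !vmE eqxx !mul1n.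
Qed.

Lemma vm_char (m : 'X_{1..N}) :
  (forall j, m (iw j) = 0%N) -> (forall j, m (ibw j) = 0%N) -> m = vm (m (iv k)).
Proof.
move=> hw hb; apply/mnmP; apply: idx_cases => [j|j|]; rewrite vmE ?eqidx ?hw ?hb //.
by rewrite mul1n.
Qed.

Lemma eqm_subl (u v m : 'X_{1..N}) : (u <= m)%MM -> (m - u == v)%MM = (m == v + u)%MM.
Proof. by move=> h; apply/eqP/eqP => [<-|->]; [rewrite submK | rewrite addmK]. Qed.

Lemma QA l (m : 'X_{1..N}) :
  (forall j, (m (iw j) == 0%N) || (m (ibw j) == 0%N)) ->
  (Q ^+ l)@_m = if m == vm l then cc ^+ l else 0.
Proof.
elim: l m => [|l IH] m hm.
  by rewrite expr0 mcoeff1 /vm mulm0n; case: eqP.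
rewrite QS big1 ?add0r; last first.
  move=> j _; rewrite lemUU ?eq_iw_ibw //.
  by case/orP: (hm j) => /eqP ->; rewrite ?andbF.
case: ifP => hU.
  rewrite IH; last first.
    by move=> j; rewrite !mnmBE !mnm1E !eqidx !subn0.
  rewrite eqm_subl // /vm mulmSr.
  by case: eqP => _; rewrite ?mulr0 // exprS.
rewrite mulr0; case: eqP => // em.
by move: hU; rewrite lemU em mulmnE mnm1E eqxx.
Qed.

Lemma QC3 l j0 (m : 'X_{1..N}) : m (iw j0) = 1%N -> m (ibw j0) = 1%N ->
  (forall j, j != j0 -> m (iw j) = 0%N /\ m (ibw j) = 0%N) ->
  (Q ^+ l)@_m = if l == (m (iv k)).+1 then l%:R * cc ^+ (m (iv k)) else 0.
Proof.
elim: l m => [|l IH] m h1 h2 h3.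
  rewrite expr0 mcoeff1; case: eqP => // em.
  by move: h1; rewrite em mnm0E.
rewrite QS (bigD1 j0) //= big1 ?addr0; last first.
  move=> j nj; rewrite lemUU ?eq_iw_ibw //.
  by case: (h3 j nj) => -> _.
rewrite lemUU ?eq_iw_ibw // h1 h2 /=.
set m' := (m - _)%MM.
have hw j : m' (iw j) = 0%N.
  rewrite /m' mnmBE mnmDE !mnm1E !eqidx; case: (eqVneq j0 j) => [<-|nj].
    by rewrite h1.
  by case: (h3 j); [rewrite eq_sym|move=> ->].
have hb j : m' (ibw j) = 0%N.
  rewrite /m' mnmBE mnmDE !mnm1E !eqidx; case: (eqVneq j0 j) => [<-|nj].
    by rewrite h2.
  by case: (h3 j); [rewrite eq_sym|move=> _ ->].
have hv : m' (iv k) = m (iv k).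
  by rewrite /m' mnmBE mnmDE !mnm1E !eqidx subn0.
rewrite QA; last by move=> j; rewrite hw.
rewrite {1}(vm_char hw hb) vm_eq hv lemU.
case: (posnP (m (iv k))) => ht.
  rewrite ht mulr0 addr0 expr0 mulr1.
  by case: (eqVneq 0%N l) => [<-|nl] //; rewrite eqSS eq_sym (negbTE nl).
rewrite IH; first last.
- by move=> j nj; rewrite !mnmBE !mnm1E !eqidx !subn0; apply: h3.
- by rewrite mnmBE mnm1E eqidx subn0.
- by rewrite mnmBE mnm1E eqidx subn0.
rewrite mnmBE mnm1E eqxx subn1 prednK // eqSS eq_sym.
case: eqP => [->|] //; last by rewrite mulr0 addr0.
rewrite mulrCA -exprS prednK // -[X in X + _]mul1r -mulrDl.
by rewrite -natr1 addrC.
Qed.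

Lemma mdeg_subU (u m : 'X_{1..N}) : (u <= m)%MM -> mdeg (m - u) = (mdeg m - mdeg u)%N.
Proof. by move=> h; rewrite -{2}(submK h) mdegD addnK. Qed.

Lemma mdeg_le (u m : 'X_{1..N}) : (u <= m)%MM -> (mdeg u <= mdeg m)%N.
Proof. by move=> h; rewrite -(submK h) mdegD leq_addl. Qed.

Lemma Qdeg l (m : 'X_{1..N}) : (Q ^+ l)@_m != 0 -> (l <= mdeg m)%N.
Proof.
elim: l m => [|l IH] m //.
apply: contraR; rewrite -ltnNge => hl.
rewrite QS big1 ?add0r.
  case: ifP => h; last by rewrite mulr0.
  case: (eqVneq ((Q ^+ l)@_(m - U_(iv k))) 0) => [->|/IH]; first by rewrite mulr0.
  have := mdeg_le h; rewrite mdeg_subU // mdeg1 => ? ?; exfalso; lia.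
move=> j _; case: ifP => h //.
case: (eqVneq ((Q ^+ l)@_(m - (U_(iw j) + U_(ibw j)))) 0) => [->|/IH] //.
have := mdeg_le h; rewrite mdeg_subU // mdegD !mdeg1 => ? ?; exfalso; lia.
Qed.

Lemma awE a i : aw a i = (\sum_(j < k) ((iw j == i) * a j))%N.
Proof. by rewrite /aw mnm_sumE; apply: eq_bigr => j _; rewrite mulmnE mnm1E. Qed.

Lemma aw_iw a j : aw a (iw j) = a j.
Proof.
rewrite awE (bigD1 j) //= eqxx mul1n big1 ?addn0 // => j' nj.
by rewrite eq_iw (negbTE nj).
Qed.
Lemma aw_ibw a j : aw a (ibw j) = 0%N.
Proof. by rewrite awE big1 // => j' _; rewrite eq_iw_ibw. Qed.
Lemma aw_iv a : aw a (iv k) = 0%N.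
Proof. by rewrite awE big1 // => j' _; rewrite eq_iw_iv. Qed.

Definition am (m : 'X_{1..N}) : 'X_{1..k} := [multinom m (iw j) | j < k].

Lemma le_mdeg (m : 'X_{1..N}) i : (m i <= mdeg m)%N.
Proof. by rewrite mdegE (bigD1 i) //= leq_addr. Qed.

Lemma Pterm_supp (a : 'X_{1..k}) (l : nat) (m : 'X_{1..N}) : (Pterm R a l)@_m != 0 ->
  (forall j, a j <= mdeg m)%N /\ (l <= mdeg m)%N.
Proof.
rewrite mcoeffPterm; case: ifP => h; last by rewrite eqxx.
move=> /Qdeg hl; split; last by apply: leq_trans hl (mdegB _ _).
move=> j; rewrite -aw_iw; apply: leq_trans (le_mdeg m (iw j)).
by move/mnm_lepP: h.
Qed.

Lemma mnm0P (a : 'X_{1..k}) : (a == 0%MM) = [forall j, a j == 0%N].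
Proof.
apply/eqP/forallP => [-> j|h]; first by rewrite mnm0E.
by apply/mnmP => j'; rewrite mnm0E; apply/eqP.
Qed.

Lemma amE m j : am m j = m (iw j).
Proof. by rewrite /am mnmE. Qed.

Lemma neq_mnm (a b : 'X_{1..k}) : a != b -> exists j, a j != b j.
Proof.
move=> nab; apply/existsP; rewrite -negb_forall; apply: contra nab => /forallP h.
by apply/eqP/mnmP => j; apply/eqP.
Qed.

Lemma P1 (a : 'X_{1..k}) (l : nat) (m : 'X_{1..N}) :
  (forall j, m (ibw j) = 0%N) ->
  (Pterm R a l)@_m = if (a == am m) && (l == m (iv k)) then cc ^+ l else 0.
Proof.
move=> hb; rewrite mcoeffPterm.
case: (eqVneq a (am m)) => [->|na] /=.
  have -> : (aw (am m) <= m)%MM.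
    apply/mnm_lepP; apply: idx_cases => [j|j|].
    - by rewrite aw_iw amE.
    - by rewrite aw_ibw.
    - by rewrite aw_iv.
  rewrite QA; last by move=> j; rewrite !mnmBE hb orbT.
  set m' := (m - _)%MM.
  have hw j : m' (iw j) = 0%N by rewrite /m' mnmBE aw_iw amE subnn.
  have hb' j : m' (ibw j) = 0%N by rewrite /m' mnmBE aw_ibw hb.
  rewrite (vm_char hw hb') vm_eq /m' mnmBE aw_iv subn0.
  by rewrite eq_sym.
case: ifP => h //.
rewrite QA; last by move=> j; rewrite !mnmBE hb orbT.
case: eqP => // e; exfalso.
have [j nj] := neq_mnm na.
have := congr1 (fun m0 : 'X_{1..N} => m0 (iw j)) e => /=.
rewrite mnmBE aw_iw vmE eqidx mul0n.
move/mnm_lepP: h => /(_ (iw j)); rewrite aw_iw.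
move: nj; rewrite amE; lia.
Qed.

Lemma P2 (a : 'X_{1..k}) (l : nat) (m : 'X_{1..N}) :
  (forall j, m (iw j) = 0%N) ->
  (Pterm R a l)@_m = if (a == 0%MM) && (m == vm l) then cc ^+ l else 0.
Proof.
move=> hw; rewrite mcoeffPterm.
case: (eqVneq a 0%MM) => [->|na] /=.
  have -> : aw 0%MM = 0%MM.
    by apply/mnmP => i; rewrite awE mnm0E big1 // => j _; rewrite mnm0E muln0.
  have -> : (0%MM <= m)%MM by apply/mnm_lepP => i; rewrite mnm0E.
  rewrite subm0 QA //.
  by move=> j; rewrite hw.
case: ifP => h //; exfalso.
have [j nj] := neq_mnm na.
move/mnm_lepP: h => /(_ (iw j)); rewrite aw_iw hw.
move: nj; rewrite mnm0E; lia.
Qed.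

Lemma P3 (a : 'X_{1..k}) (l : nat) j0 (m : 'X_{1..N}) :
  m (iw j0) = 1%N -> m (ibw j0) = 1%N ->
  (forall j, j != j0 -> m (iw j) = 0%N /\ m (ibw j) = 0%N) ->
  (Pterm R a l)@_m =
    if (a == 0%MM) && (l == (m (iv k)).+1) then l%:R * cc ^+ (m (iv k)) else 0.
Proof.
move=> h1 h2 h3; rewrite mcoeffPterm.
case: (eqVneq a 0%MM) => [->|na] /=.
  have -> : aw 0%MM = 0%MM.
    by apply/mnmP => i; rewrite awE mnm0E big1 // => j _; rewrite mnm0E muln0.
  have -> : (0%MM <= m)%MM by apply/mnm_lepP => i; rewrite mnm0E.
  by rewrite subm0 (QC3 _ h1 h2 h3).
case: ifP => h //.
have ha j : j != j0 -> a j = 0%N.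
  move=> nj; move/mnm_lepP: h => /(_ (iw j)); rewrite aw_iw.
  by case: (h3 j nj) => -> _; rewrite leqn0 => /eqP.
have [j nj] := neq_mnm na.
have ej : j = j0.
  by apply/eqP; apply: contraR nj => /ha ->; rewrite mnm0E.
subst j.
have ha0 : a j0 = 1%N.
  move/mnm_lepP: h => /(_ (iw j0)); rewrite aw_iw h1.
  by move: nj; rewrite mnm0E; lia.
rewrite QA; last first.
  move=> j; rewrite mnmBE aw_iw.
  case: (eqVneq j j0) => [->|nj']; first by rewrite h1 ha0.
  by case: (h3 j nj') => -> _.
case: eqP => // e; exfalso.
have := congr1 (fun m0 : 'X_{1..N} => m0 (ibw j0)) e => /=.
by rewrite mnmBE aw_ibw vmE eqidx mul0n h2.
Qed.

Definition Fam (A : 'X_{1..k} -> nat -> C) :=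
  fun (al : 'X_{1..k} * nat) (m : 'X_{1..N}) => A al.1 al.2 * (Pterm R al.1 al.2)@_m.

Lemma sum_single (I : eqType) (s : seq I) (F : I -> C) x0 :
  uniq s -> (forall x, x \notin s -> F x = 0) -> (forall x, x != x0 -> F x = 0) ->
  \sum_(x <- s) F x = F x0.
Proof.
move=> us hs h0; case: (boolP (x0 \in s)) => hx.
  rewrite (bigD1_seq x0) //= big1 ?addr0 // => x /h0 //.
rewrite (hs _ hx) big1_seq // => x /andP [_ xs]; apply: h0.
by apply: contraNneq hx => <-.
Qed.

Lemma fs_single A (g : series R k) m x0 : formal_sum (Fam A) g ->
  (forall x, x != x0 -> Fam A x m = 0) -> g m = Fam A x0 m.
Proof.
move=> /(_ m) [s [us hs ->]] h0; exact: sum_single.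
Qed.

Lemma fs_zero A (g : series R k) (m : 'X_{1..N}) : formal_sum (Fam A) g ->
  (forall x, Fam A x m = 0) -> g m = 0.
Proof.
move=> hg h0; rewrite (fs_single (x0 := (0%MM, 0%N)) hg) //.
Qed.

Definition Lst (m : 'X_{1..N}) : seq ('X_{1..k} * nat) :=
  undup [seq ([multinom (nat_of_ord (f j)) | j < k], l) |
           f : {ffun 'I_k -> 'I_(mdeg m).+1} <- enum {ffun 'I_k -> 'I_(mdeg m).+1},
           l <- iota 0 (mdeg m).+1].

Lemma Lst_supp A m x : x \notin Lst m -> Fam A x m = 0.
Proof.
case: x => a l; apply: contraNeq => hF.
have hP : (Pterm R a l)@_m != 0.
  by apply: contraNneq hF => h; rewrite /Fam /= h mulr0.
have [ha hl] := Pterm_supp hP.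
rewrite mem_undup; apply/allpairsP.
exists ([ffun j => inord (a j)] : {ffun 'I_k -> 'I_(mdeg m).+1}, l).
split; first by rewrite mem_enum.
  by rewrite mem_iota add0n ltnS.
congr (_, _); apply/mnmP => j; rewrite mnmE /= ffunE inordK //.
by rewrite ltnS.
Qed.

Definition gser A : series R k := fun m => \sum_(x <- Lst m) Fam A x m.

Lemma gser_fs A : formal_sum (Fam A) (gser A).
Proof.
move=> m; exists (Lst m); split => //; first exact: undup_uniq.
exact: Lst_supp.
Qed.

Lemma aw0 : aw 0%MM = 0%MM.
Proof. by apply/mnmP => i; rewrite awE mnm0E big1 // => j _; rewrite mnm0E muln0. Qed.

Definition M1 (j : 'I_k) t : 'X_{1..N} := (U_(iw j) + U_(ibw j) + vm t)%MM.

Lemma M1_iw j t j' : M1 j t (iw j') = (j == j' : nat).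
Proof. by rewrite /M1 !mnmDE vmE !mnm1E !eqidx /= ?mul0n ?mul1n ?addn0 ?add0n. Qed.
Lemma M1_ibw j t j' : M1 j t (ibw j') = (j == j' : nat).
Proof. by rewrite /M1 !mnmDE vmE !mnm1E !eqidx /= ?mul0n ?mul1n ?addn0 ?add0n. Qed.
Lemma M1_iv j t : M1 j t (iv k) = t.
Proof. by rewrite /M1 !mnmDE vmE !mnm1E !eqidx /= ?mul0n ?mul1n ?addn0 ?add0n. Qed.

Lemma mswap_M1 j t : mswap (M1 j t) = M1 j t.
Proof. by apply: mswap_fix => j'; rewrite M1_iw M1_ibw. Qed.

Lemma mswap_vm t : mswap (vm t) = vm t.
Proof. by apply: mswap_fix => j'; rewrite !vmE !eqidx. Qed.

Definition Ma a l : 'X_{1..N} := (aw a + vm l)%MM.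
Lemma Ma_iw a l j : Ma a l (iw j) = a j.
Proof. by rewrite /Ma mnmDE vmE aw_iw eqidx addn0. Qed.
Lemma Ma_ibw a l j : Ma a l (ibw j) = 0%N.
Proof. by rewrite /Ma mnmDE vmE aw_ibw eqidx. Qed.
Lemma Ma_iv a l : Ma a l (iv k) = l.
Proof. by rewrite /Ma mnmDE vmE aw_iv eqidx mul1n. Qed.

Lemma Ma_char (m : 'X_{1..N}) : (forall j, m (ibw j) = 0%N) -> m = Ma (am m) (m (iv k)).
Proof.
move=> hb; apply/mnmP; apply: idx_cases => [j|j|].
- by rewrite Ma_iw amE.
- by rewrite Ma_ibw hb.
- by rewrite Ma_iv.
Qed.

Lemma G1 A (g : series R k) (m : 'X_{1..N}) : formal_sum (Fam A) g -> (forall j, m (ibw j) = 0%N) ->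
  g m = A (am m) (m (iv k)) * cc ^+ (m (iv k)).
Proof.
move=> hg hb; rewrite (fs_single (x0 := (am m, m (iv k))) hg).
  by rewrite /Fam /= P1 // !eqxx.
case=> a l nx; rewrite /Fam /= P1 //.
by move: nx; rewrite xpair_eqE => /negbTE ->; rewrite mulr0.
Qed.

Lemma G2 A (g : series R k) (m : 'X_{1..N}) : formal_sum (Fam A) g -> (forall j, m (iw j) = 0%N) ->
  (exists j, m (ibw j) != 0%N) -> g m = 0.
Proof.
move=> hg hw [j hj]; apply: (fs_zero hg) => -[a l]; rewrite /Fam /= P2 //.
case: (m =P vm l) => [em|_]; last by rewrite andbF mulr0.
by move: hj; rewrite em vmE eqidx.
Qed.

Lemma G3 A (g : series R k) j0 t : formal_sum (Fam A) g ->
  g (M1 j0 t) = A 0%MM t.+1 * (t.+1%:R * cc ^+ t).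
Proof.
move=> hg.
have h1 : M1 j0 t (iw j0) = 1%N by rewrite M1_iw eqxx.
have h2 : M1 j0 t (ibw j0) = 1%N by rewrite M1_ibw eqxx.
have h3 j : j != j0 -> M1 j0 t (iw j) = 0%N /\ M1 j0 t (ibw j) = 0%N.
  by move=> nj; rewrite M1_iw M1_ibw eq_sym (negbTE nj).
rewrite (fs_single (x0 := (0%MM, t.+1)) hg).
  by rewrite /Fam /= (P3 _ _ h1 h2 h3) M1_iv !eqxx.
case=> a l nx; rewrite /Fam /= (P3 _ _ h1 h2 h3) M1_iv.
by move: nx; rewrite xpair_eqE => /negbTE ->; rewrite mulr0.
Qed.

Lemma G0 A (g : series R k) (m : 'X_{1..N}) : formal_sum (Fam A) g ->
  (forall x, x != (0%MM, 0%N) -> A x.1 x.2 = 0) -> g m = A 0%MM 0%N * (m == 0%MM)%:R.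
Proof.
move=> hg hA; rewrite (fs_single (x0 := (0%MM, 0%N)) hg).
  rewrite /Fam /= mcoeffPterm aw0.
  have -> : (0%MM <= m)%MM by apply/mnm_lepP => i; rewrite mnm0E.
  by rewrite subm0 expr0 mcoeff1.
by move=> x /hA; rewrite /Fam => ->; rewrite mul0r.
Qed.

Lemma cc_neq0 : cc != 0.
Proof. by rewrite /cc mulf_neq0 ?neq0Ci // pnatr_eq0. Qed.
Lemma cc_conj : cc^* = - cc.
Proof. by rewrite /cc rmorphM /= conjC_nat conjCi mulrN. Qed.
Lemma two_neq0 : (2%:R : C) != 0.
Proof. by rewrite pnatr_eq0. Qed.
Lemma conj_half (x : C) : (x / 2%:R)^* = x^* / 2%:R.
Proof. by rewrite rmorphM /= fmorphV /= conjC_nat. Qed.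

Lemma Laplw_E (c : series R k) m : Laplw c m =
  \sum_(j < k) ((m (iw j)).+1%:R * ((m + U_(iw j))%MM (ibw j)).+1%:R *
                c (m + U_(iw j) + U_(ibw j))%MM).
Proof. by apply: eq_bigr => j _; rewrite /fderiv mulrA. Qed.

Lemma vmUU j t : (vm t + U_(iw j) + U_(ibw j))%MM = M1 j t.
Proof. by apply/mnmP => i; rewrite /M1 !mnmDE; lia. Qed.

Lemma degw_M1 j t : degw (M1 j t) = 1%N.
Proof.
rewrite /degw (bigD1 j) //= M1_iw eqxx big1 // => j' nj.
by rewrite M1_iw eq_sym (negbTE nj).
Qed.
Lemma degbw_M1 j t : degbw (M1 j t) = 1%N.
Proof.
rewrite /degbw (bigD1 j) //= M1_ibw eqxx big1 // => j' nj.
by rewrite M1_ibw eq_sym (negbTE nj).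
Qed.

Lemma Lap_vm (c : series R k) t :
  Laplw (Apq 1 1 c) (vm t) = \sum_(j < k) c (M1 j t).
Proof.
rewrite Laplw_E; apply: eq_bigr => j _.
rewrite mnmDE !vmE !mnm1E !eqidx /= mul1r mul1r vmUU.
by rewrite /Apq degw_M1 degbw_M1.
Qed.

Lemma am_vm t : am (vm t) = 0%MM.
Proof. by apply/mnmP => j; rewrite amE vmE eqidx mnm0E. Qed.

Lemma am_Ma a l : am (Ma a l) = a.
Proof. by apply/mnmP => j; rewrite amE Ma_iw. Qed.

Lemma mswap0 : mswap (0%MM : 'X_{1..N}) = 0%MM.
Proof. by apply: mswap_fix => j; rewrite !mnm0E. Qed.

Lemma uniq_part (f : series R k) : N0 f -> JP f -> forall m, f m = 0.
Proof.
move=> [fJE [fA fL]] [A [g [hg hf]]].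
have fz1 (m : 'X_{1..N}) : (forall j, m (ibw j) = 0%N) -> f m = 0.
  move=> hb; have := fA (degw m) 0%N (minn0 _) m.
  by rewrite /Apq eqxx (proj2 (degbw0 m) hb) eqxx.
have U1 a l : a != 0%MM -> A a l = 0.
  move=> na; have := fz1 (Ma a l) (Ma_ibw a l).
  rewrite hf /conj_series (G1 hg (Ma_ibw a l)) am_Ma Ma_iv.
  rewrite (G2 hg (m := mswap (Ma a l))); first last.
  - have [j nj] := neq_mnm na; exists j.
    by rewrite mswapE swap_ibw Ma_iw; move: nj; rewrite mnm0E.
  - by move=> j; rewrite mswapE swap_iw Ma_ibw.
  rewrite conjC0 addr0 => /eqP; rewrite mulf_eq0 invr_eq0 (negbTE two_neq0) orbF.
  by rewrite mulf_eq0 expf_eq0 (negbTE cc_neq0) andbF orbF => /eqP.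
have U2 t : A 0%MM t * cc ^+ t + (A 0%MM t * cc ^+ t)^* = 0.
  have hvb : forall j, vm t (ibw j) = 0%N by move=> j; rewrite vmE eqidx.
  have := fz1 (vm t) hvb.
  rewrite hf /conj_series mswap_vm (G1 hg hvb).
  rewrite am_vm vmE eqxx mul1n => /eqP.
  by rewrite mulf_eq0 invr_eq0 (negbTE two_neq0) orbF => /eqP.
have U3 t : A 0%MM t.+1 = 0.
  have := fL (vm t); rewrite Lap_vm.
  pose G := A 0%MM t.+1 * (t.+1%:R * cc ^+ t).
  have hG j : f (M1 j t) = G.
    rewrite hf /conj_series mswap_M1 (G3 _ _ hg).
    set z := A 0%MM t.+1 * cc ^+ t.+1.
    have ez : z^* = - z by apply/eqP; rewrite -addr_eq0 addrC; apply/eqP/U2.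
    have -> : A 0%MM t.+1 * (t.+1%:R * cc ^+ t) = t.+1%:R * z / cc.
      rewrite /z exprS; field; exact: cc_neq0.
    rewrite rmorphM /= fmorphV /= rmorphM /= conjC_nat ez cc_conj /G /z exprS.
    field; rewrite ?cc_neq0 ?two_neq0 //.
  rewrite (eq_bigr (fun=> G)) // sumr_const card_ord => /eqP.
  have hk0 : (k == 0%N) = false by move: hk; rewrite lt0n => /negbTE.
  rewrite -mulr_natr mulf_eq0 pnatr_eq0 hk0 orbF /G => /eqP/eqP.
  rewrite mulf_eq0 mulf_eq0 pnatr_eq0 /= expf_eq0 (negbTE cc_neq0) andbF !orbF.
  by move=> /eqP.
have A0 : forall x, x != (0%MM, 0%N) -> A x.1 x.2 = 0.
  case=> a l /=; case: (eqVneq a 0%MM) => [->|na]; last by rewrite U1.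
  by case: l => [|t]; rewrite ?eqxx // => _; apply: U3.
move=> m; rewrite hf /conj_series !(G0 _ hg A0).
case: (eqVneq m 0%MM) => [->|nm].
  rewrite mswap0.
  rewrite eqxx mulr1; have := U2 0%N; rewrite expr0 mulr1 => ->.
  by rewrite mul0r.
have -> : (mswap m == 0%MM) = false.
  apply/negbTE; apply: contra nm => /eqP e.
  by rewrite -(mswapK m) e mswap0.
by rewrite !mulr0 conjC0 addr0 mul0r.
Qed.

Definition Dt (f : series R k) t : C := \sum_(j < k) f (M1 j t).
Definition zc (f : series R k) (a : 'X_{1..k}) (l : nat) : C :=
  if a == 0%MM then
    (if l is t.+1 then f (vm l) + (cc / 2%:R) * (2%:R * Dt f t / (k%:R * l%:R))
     else f (vm 0))
  else 2%:R * f (Ma a l).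
Definition Acoef (f : series R k) a l := zc f a l / cc ^+ l.

Lemma degwD (m1 m2 : 'X_{1..N}) : degw (m1 + m2)%MM = (degw m1 + degw m2)%N.
Proof. by rewrite /degw -big_split; apply: eq_bigr => j _; rewrite mnmDE. Qed.
Lemma degbwD (m1 m2 : 'X_{1..N}) : degbw (m1 + m2)%MM = (degbw m1 + degbw m2)%N.
Proof. by rewrite /degbw -big_split; apply: eq_bigr => j _; rewrite mnmDE. Qed.
Lemma degw_Uw (j : 'I_k) : degw U_(iw j) = 1%N.
Proof.
rewrite /degw (bigD1 j) //= mnm1E eqxx big1 // => j' nj.
by rewrite mnm1E eq_iw eq_sym (negbTE nj).
Qed.
Lemma degw_Ub (j : 'I_k) : degw U_(ibw j) = 0%N.
Proof. by rewrite /degw big1 // => j' _; rewrite mnm1E eqidx. Qed.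
Lemma degbw_Ub (j : 'I_k) : degbw U_(ibw j) = 1%N.
Proof.
rewrite /degbw (bigD1 j) //= mnm1E eqxx big1 // => j' nj.
by rewrite mnm1E eq_ibw eq_sym (negbTE nj).
Qed.
Lemma degbw_Uw (j : 'I_k) : degbw U_(iw j) = 0%N.
Proof. by rewrite /degbw big1 // => j' _; rewrite mnm1E eqidx. Qed.

Lemma knz : (k%:R : C) != 0.
Proof. by rewrite pnatr_eq0 -lt0n. Qed.
Lemma n1S t : (1 + t%:R : C) != 0.
Proof. by rewrite addrC natr1 pnatr_eq0. Qed.

Lemma exist_part (f : series R k) : JE f ->
  exists g h : series R k, [/\ N0 g, JP h & forall m, f m = g m + h m].
Proof.
move=> fJE.
pose A := Acoef f.
pose g := gser A.
pose h : series R k := fun m => (g m + conj_series g m) / 2%:R.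
have hg : formal_sum (Fam A) g := gser_fs A.
have freal m : (f (mswap m))^* = f m := fJE m.
have freal' m : mswap m = m -> (f m)^* = f m.
  by move=> e; rewrite -{1}e freal.
have hreal m : (h (mswap m))^* = h m.
  rewrite /h /conj_series conj_half rmorphD /= conjCK mswapK.
  by rewrite addrC.
have AK a l : A a l * cc ^+ l = zc f a l.
  by rewrite /A /Acoef divfK // expf_neq0 // cc_neq0.
have Dreal t : (Dt f t)^* = Dt f t.
  by rewrite /Dt rmorph_sum /=; apply: eq_bigr => j _; rewrite freal' ?mswap_M1.
have K1 (m : 'X_{1..N}) : (forall j, m (ibw j) = 0%N) -> h m = f m.
  move=> hb; rewrite /h /conj_series (G1 hg hb) AK.
  case: (eqVneq (am m) 0%MM) => [a0|na].
    have hw j : m (iw j) = 0%N by rewrite -amE a0 mnm0E.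
    have em := vm_char hw hb.
    move: (m (iv k)) em => t em; subst m.
    have hvb : forall j, vm t (ibw j) = 0%N by move=> j; rewrite vmE eqidx.
    rewrite mswap_vm (G1 hg hvb) am_vm vmE eqxx mul1n AK /zc eqxx.
    case: t {hw hb hvb a0} => [|t].
      rewrite freal' ?mswap_vm //; by field.
    rewrite !rmorphD /= !rmorphM /= !fmorphV /= !rmorphM /= !conjC_nat Dreal conjCi mulrN -/cc.
    rewrite freal' ?mswap_vm //.
    by field; rewrite knz n1S.
  rewrite /zc (negbTE na) -Ma_char //.
  rewrite (G2 hg (m := mswap m)); first last.
  - have [j nj] := neq_mnm na; exists j.
    by rewrite mswapE swap_ibw -amE; move: nj; rewrite mnm0E.
  - by move=> j; rewrite mswapE swap_iw hb.
  by rewrite conjC0 addr0; field.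
pose g' : series R k := fun m => f m - h m.
have gJE : JE g'.
  move=> m; rewrite /conj_series /g' rmorphB /= freal hreal //.
exists g', h; split => //; last by move=> m; rewrite /g' subrK.
split; [exact: gJE | split].
  move=> p q hpq m; rewrite /Apq; case: ifP => // /andP [/eqP dw /eqP db].
  have : (degw m = 0 \/ degbw m = 0)%N by move: hpq; rewrite -dw -db; lia.
  case=> [/degw0 hw|/degbw0 hb]; last by rewrite /g' K1 // subrr.
  rewrite -gJE /conj_series /g' K1 ?subrr ?conjC0 //.
  by move=> j; rewrite mswapE swap_ibw hw.
move=> m.
case: (boolP ((degw m == 0%N) && (degbw m == 0%N))) => [/andP [/eqP/degw0 hw /eqP/degbw0 hb]|hn].
  rewrite (vm_char hw hb); move: (m (iv k)) => t.
  rewrite Lap_vm /g' sumrB.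
  have hM j : h (M1 j t) = Dt f t / k%:R.
    rewrite /h /conj_series mswap_M1 (G3 _ _ hg).
    set z := zc f 0%MM t.+1.
    have -> : A 0%MM t.+1 * (t.+1%:R * cc ^+ t) = t.+1%:R * z / cc.
      rewrite /z -AK exprS; field; exact: cc_neq0.
    have ez : z = f (vm t.+1) + (cc / 2%:R) * (2%:R * Dt f t / (k%:R * t.+1%:R)).
      by rewrite /z /zc eqxx.
    rewrite rmorphM /= fmorphV /= rmorphM /= conjC_nat cc_conj ez.
    rewrite !rmorphD /= !rmorphM /= !fmorphV /= !rmorphM /= !conjC_nat Dreal conjCi mulrN -/cc.
    rewrite freal' ?mswap_vm //.
    by field; rewrite knz cc_neq0 n1S.
  rewrite (eq_bigr _ (fun j _ => hM j)) sumr_const card_ord -/(Dt f t).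
  rewrite -mulr_natr; field.
  by rewrite pnatr_eq0; move: hk; rewrite lt0n.
rewrite Laplw_E big1 // => j _.
rewrite /Apq !degwD !degbwD degw_Uw degw_Ub degbw_Uw degbw_Ub.
case: ifP => [/andP [/eqP h1 /eqP h2]|_]; last by rewrite mulr0.
exfalso; move: hn.
have -> : degw m = 0%N by lia.
by have -> : degbw m = 0%N by lia.
by exists A, g; split.
Qed.
End Work.

Theorem mainTheorem9 (R : realType) (n : nat) (hn : (2 <= n)%N) :
  (forall f : series R n.-1, JE f ->
     exists g h : series R n.-1, [/\ N0 g, JP h & forall m, f m = g m + h m]) /\
  (forall f : series R n.-1, N0 f -> JP f -> forall m, f m = 0).
Proof.
have hk : (0 < n.-1)%N by case: n hn => [|[|n]].
split => f; [exact: (exist_part hk) | exact: (uniq_part hk)].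
Qed.
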